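(* Let $(\mathfrak{g},f)$ be a factorizable Lie bialgebra. Put $\mathfrak{c}_1=\operatorname{Im}(f-1)$; then $\mathfrak{c}_1^\perp=\operatorname{Ker}f$, and $f$ induces an endomorphism $\tilde f$ of $\mathfrak{c}_1/\mathfrak{c}_1^\perp$ making $(\mathfrak{c}_1/\mathfrak{c}_1^\perp,\tilde f)$ a factorizable Lie bialgebra (with the form induced by $\kappa$). The map $\mathfrak{g}_f^{cop}\to\mathfrak{c}_1/\mathfrak{c}_1^\perp$, $x\mapsto (f-1)(x)+\mathfrak{c}_1^\perp$, is a surjective homomorphism of Lie bialgebras, with kernel $\operatorname{Ker}f+\operatorname{Ker}(f-1)$.
   Context: Let $\mathfrak{g}$ be a finite-dimensional complex Lie algebra with a nondegenerate invariant symmetric bilinear form $\kappa$; $\perp$ and adjoints $f^*$ are taken with respect to $\kappa$. A factorizable Lie bialgebra $(\mathfrak{g},f)$ is given by $f\in\operatorname{End}\mathfrak{g}$ with (i) $f+f^*=1$ and (ii) $[f(x),f(y)]=f([x,f(y)]+[f(x),y]-[x,y])$ for all $x,y$; its cobracket is $\delta(x)=[x\otimes1+1\otimes x,r]$ where $r=\sum_a x_a\otimes f(x^a)$ for any pair of $\kappa$-dual bases $(x_a),(x^a)$. $\mathfrak{g}_f$ denotes the dual Lie bialgebra $\mathfrak{g}^*$ transported to $\mathfrak{g}$ via $\kappa$: as a Lie algebra it is $\mathfrak{g}$ with bracket $[x,y]_f=[x,f(y)]+[f(x),y]-[x,y]$, and its cobracket is the transpose (via $\kappa$) of the bracket of $\mathfrak{g}$.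 For a Lie bialgebra $\mathfrak{l}$, $\mathfrak{l}^{cop}$ is $\mathfrak{l}$ with the same bracket and the negated cobracket. *)

(* Defs.v *)
(* Finite-dimensional complex vector spaces are modelled as
   [vectType C] with C := R[i], R : realType (so C is the field of complex
   numbers). *)
From HB Require Import structures.
From mathcomp Require Import all_boot all_order all_algebra.
From mathcomp Require Export reals.
From mathcomp Require Export complex.
Set Implicit Arguments.
Unset Strict Implicit.
Unset Printing Implicit Defensive.
Import GRing.Theory.
Local Open Scope ring_scope.

Section LieDefs.
Variables (K : fieldType) (V : vectType K).

Definition lie_bracket (br : V -> V -> V) : Prop :=
  [/\ (forall a x y z, br (a *: x + y) z = a *: br x z + br y z),
      (forall a x y z, br x (a *: y + z) = a *: br x y + br x z),
      (forall x, br x x = 0) &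
      (forall x y z, br x (br y z) + br y (br z x) + br z (br x y) = 0)].

Definition nondeg_inv_sym_form (br : V -> V -> V) (k : V -> V -> K) : Prop :=
  [/\ (forall a x y z, k (a *: x + y) z = a * k x z + k y z),
      (forall a x y z, k x (a *: y + z) = a * k x y + k x z),
      (forall x y, k x y = k y x),
      (forall x, (forall y, k x y = 0) -> x = 0) &
      (forall x y z, k (br x y) z = k x (br y z))].

Definition is_adjoint (k : V -> V -> K) (f g : 'End(V)) : Prop :=
  forall x y, k (f x) y = k x (g y).

Definition factorizable (br : V -> V -> V) (k : V -> V -> K) (f : 'End(V)) : Prop :=
  [/\ lie_bracket br,
      nondeg_inv_sym_form br k,
      (exists fs : 'End(V), is_adjoint k f fs /\ f + fs = \1%VF) &
      (forall x y, br (f x) (f y) = f (br x (f y) + br (f x) y - br x y))].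

Definition fbracket (br : V -> V -> V) (f : 'End(V)) (x y : V) : V :=
  br x (f y) + br (f x) y - br x y.

Definition orthogonal_to (k : V -> V -> K) (U : {vspace V}) (y : V) : Prop :=
  forall x, x \in U -> k x y = 0.

(* Dual space V^* and 2-tensors: V (x) V is identified (canonically, V being
   finite-dimensional) with the bilinear maps V^* x V^* -> K; the elementary
   tensor a (x) b is  fun xi eta => xi a * eta b. *)
Definition dual := 'Hom(V, K^o).
Definition tensor2 := dual -> dual -> K.

Definition dual_bases (k : V -> V -> K) (e e' : seq V) : Prop :=
  [/\ basis_of fullv e, basis_of fullv e', size e' = size e &
      forall i j, (i < size e)%N -> (j < size e)%N ->
        k e`_i e'`_j = (i == j)%:R].

(* Cobracket of the factorizable Lie bialgebra:
   delta(x) = [x (x) 1 + 1 (x) x, r],  r = sum_a x_a (x) f(x^a),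
   i.e. delta(x) = sum_a [x,x_a] (x) f(x^a) + x_a (x) [x, f(x^a)]. *)
Definition fact_cobracket (br : V -> V -> V) (f : 'End(V)) (e e' : seq V)
    (x : V) : tensor2 :=
  fun xi eta => \sum_(i < size e)
    (xi (br x e`_i) * eta (f e'`_i) + xi e`_i * eta (br x (f e'`_i))).

(* Cobracket of g_f: the transpose (via k) of the bracket of g, i.e. the
   unique delta_f(x) with (k (x) k)(delta_f(x), y (x) z) = k(x, [y,z]);
   in dual bases: delta_f(x) = sum_{a,b} k(x,[x^a,x^b]) x_a (x) x_b. *)
Definition transp_cobracket (br : V -> V -> V) (k : V -> V -> K) (e e' : seq V)
    (x : V) : tensor2 :=
  fun xi eta => \sum_(i < size e) \sum_(j < size e)
    k x (br e'`_i e'`_j) * (xi e`_i * eta e`_j).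

End LieDefs.

Section HomDefs.
Variables (K : fieldType) (V W : vectType K).

Definition lie_bialg_hom (brV : V -> V -> V) (cobV : V -> tensor2 V)
    (brW : W -> W -> W) (cobW : W -> tensor2 W) (phi : 'Hom(V, W)) : Prop :=
  (forall x y, phi (brV x y) = brW (phi x) (phi y)) /\
  (forall x (xi eta : dual W),
      cobW (phi x) xi eta = cobV x (xi \o phi)%VF (eta \o phi)%VF).

End HomDefs.

(* Main.v *)
Require Import Defs.
From HB Require Import structures.
From mathcomp Require Import all_boot all_order all_algebra.
From mathcomp Require Import reals complex.
From mathcomp Require Import ring.
Set Implicit Arguments.
Unset Strict Implicit.
Unset Printing Implicit Defensive.
Import GRing.Theory.
Local Open Scope ring_scope.


Section Bil.
Variables (K : fieldType) (W : vectType K) (kk : W -> W -> K).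
Hypothesis kl : forall a x y z, kk (a *: x + y) z = a * kk x z + kk y z.
Hypothesis ksym : forall x y, kk x y = kk y x.

Lemma kk0l w : kk 0 w = 0.
Proof. have := kl 1 0 0 w; rewrite scaler0 addr0 mul1r => H. by apply: (addrI (kk 0 w)); rewrite addr0 -H. Qed.
Lemma kkDl x y w : kk (x + y) w = kk x w + kk y w.
Proof. by rewrite -[x]scale1r kl mul1r scale1r. Qed.
Lemma kkZl a x w : kk (a *: x) w = a * kk x w.
Proof. by rewrite -[a *: x]addr0 kl kk0l addr0. Qed.
Lemma kkNl x w : kk (- x) w = - kk x w.
Proof. by rewrite -scaleN1r kkZl mulN1r. Qed.
Lemma kkBl x y w : kk (x - y) w = kk x w - kk y w.
Proof. by rewrite kkDl kkNl. Qed.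
Lemma kk0r w : kk w 0 = 0. Proof. by rewrite ksym kk0l. Qed.
Lemma kkDr x y w : kk w (x + y) = kk w x + kk w y.
Proof. by rewrite !(ksym w) kkDl. Qed.
Lemma kkZr a x w : kk w (a *: x) = a * kk w x.
Proof. by rewrite !(ksym w) kkZl. Qed.
Lemma kkNr x w : kk w (- x) = - kk w x.
Proof. by rewrite !(ksym w) kkNl. Qed.
Lemma kkBr x y w : kk w (x - y) = kk w x - kk w y.
Proof. by rewrite !(ksym w) kkBl. Qed.
Lemma kk_suml I (r : seq I) (P : pred I) (F : I -> W) w :
  kk (\sum_(i <- r | P i) F i) w = \sum_(i <- r | P i) kk (F i) w.
Proof. exact: (big_morph (fun v => kk v w) (fun x y => kkDl x y w) (kk0l w)). Qed.
Lemma kk_sumr I (r : seq I) (P : pred I) (F : I -> W) w :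
  kk w (\sum_(i <- r | P i) F i) = \sum_(i <- r | P i) kk w (F i).
Proof. rewrite ksym kk_suml; apply: eq_bigr => i _; exact: ksym. Qed.
End Bil.

Section BilBr.
Variables (K : fieldType) (W : vectType K) (br : W -> W -> W).
Hypothesis bl : forall a x y z, br (a *: x + y) z = a *: br x z + br y z.
Hypothesis brr : forall a x y z, br x (a *: y + z) = a *: br x y + br x z.
Hypothesis balt : forall x, br x x = 0.

Lemma br0l w : br 0 w = 0.
Proof. have := bl 1 0 0 w; rewrite scaler0 addr0 scale1r => H. by apply: (addrI (br 0 w)); rewrite addr0 -H. Qed.
Lemma brDl x y w : br (x + y) w = br x w + br y w.
Proof. by rewrite -[x]scale1r bl !scale1r. Qed.
Lemma brZl a x w : br (a *: x) w = a *: br x w.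
Proof. by rewrite -[a *: x]addr0 bl br0l addr0. Qed.
Lemma brNl x w : br (- x) w = - br x w.
Proof. by rewrite -scaleN1r brZl scaleN1r. Qed.
Lemma brBl x y w : br (x - y) w = br x w - br y w.
Proof. by rewrite brDl brNl. Qed.
Lemma br0r w : br w 0 = 0.
Proof. have := brr 1 w 0 0; rewrite scaler0 addr0 scale1r => H. by apply: (addrI (br w 0)); rewrite addr0 -H. Qed.
Lemma brDr x y w : br w (x + y) = br w x + br w y.
Proof. by rewrite -[x]scale1r brr !scale1r. Qed.
Lemma brZr a x w : br w (a *: x) = a *: br w x.
Proof. by rewrite -[a *: x]addr0 brr br0r addr0. Qed.
Lemma brNr x w : br w (- x) = - br w x.
Proof. by rewrite -scaleN1r brZr scaleN1r. Qed.
Lemma brBr x y w : br w (x - y) = br w x - br w y.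
Proof. by rewrite brDr brNr. Qed.
Lemma brC x y : br x y = - br y x.
Proof.
have := balt (x + y); rewrite brDl !brDr !balt add0r addr0 => /eqP.
by rewrite addr_eq0 => /eqP.
Qed.
Lemma br_suml I (r : seq I) (P : pred I) (F : I -> W) w :
  br (\sum_(i <- r | P i) F i) w = \sum_(i <- r | P i) br (F i) w.
Proof. exact: (big_morph (fun v => br v w) (fun x y => brDl x y w) (br0l w)). Qed.
Lemma br_sumr I (r : seq I) (P : pred I) (F : I -> W) w :
  br w (\sum_(i <- r | P i) F i) = \sum_(i <- r | P i) br w (F i).
Proof. exact: (big_morph (fun v => br w v) (fun x y => brDr x y w) (br0r w)). Qed.
End BilBr.


Section Rep.
Variables (K : fieldType) (W : vectType K) (kk : W -> W -> K).
Hypothesis kl : forall a x y z, kk (a *: x + y) z = a * kk x z + kk y z.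
Hypothesis ksym : forall x y, kk x y = kk y x.
Variables (d d' : seq W).
Hypothesis Hd : dual_bases kk d d'.

Lemma rep_dual a : a = \sum_(i < size d) kk d`_i a *: d'`_i.
Proof.
case: Hd => _ /andP[/eqP Hsp _] Hsz Hkd.
have Ha : a \in span (in_tuple d') by rewrite /= Hsp memvf.
rewrite -Hsz {1}(coord_span Ha); apply: eq_bigr => i _.
congr (_ *: _).
have HK (i1 j1 : 'I_(size d')) : kk d`_i1 d'`_j1 = (val i1 == val j1)%:R.
  by apply: Hkd; rewrite -Hsz ltn_ord.
rewrite {2}(coord_span Ha) (kk_sumr kl ksym).
rewrite (bigD1 i) //= (kkZr kl ksym) HK eqxx mulr1 big1 ?addr0 //.
move=> j /negbTE ij; rewrite (kkZr kl ksym) HK.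
by rewrite (_ : (val i == val j) = false) ?mulr0 // eq_sym.
Qed.

Lemma pars_dual u v : kk u v = \sum_(i < size d) kk d`_i u * kk d'`_i v.
Proof.
rewrite {1}(rep_dual u) (kk_suml kl); apply: eq_bigr => i _.
by rewrite (kkZl kl).
Qed.

Lemma dual_repr (xi : 'Hom(W, K^o)) w :
  xi w = kk (\sum_(i < size d) xi d'`_i *: d`_i) w.
Proof.
rewrite {1}(rep_dual w) linear_sum (kk_suml kl); apply: eq_bigr => i _.
by rewrite linearZ (kkZl kl) ksym mulrC.
Qed.
End Rep.


Section Cob.
Variables (K : fieldType) (W : vectType K) (br : W -> W -> W) (kk : W -> W -> K).
Variables (f : 'End(W)) (d d' : seq W).
Hypothesis Hfac : factorizable br kk f.
Hypothesis Hd : dual_bases kk d d'.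

Lemma fact_cob_eval z (xi eta : dual W) p q :
  (forall w, xi w = kk p w) -> (forall w, eta w = kk q w) ->
  fact_cobracket br f d d' z xi eta = kk z (fbracket br f p q).
Proof.
case: Hfac => [[bl brr balt jac] [kl kr ksym knd kinv] [fs [Hadj Hffs]] Hff].
move=> Hxi Heta.
have fsE x : fs x = x - f x.
  have H := congr1 (fun g : 'End(W) => g x) Hffs.
  rewrite /= add_lfunE id_lfunE in H.
  by rewrite -{2}H addrAC subrr add0r.
rewrite /fact_cobracket big_split /=.
have -> : \sum_(i < size d) xi (br z d`_i) * eta (f d'`_i) = kk (br p z) (fs q).
  rewrite (pars_dual kl ksym Hd); apply: eq_bigr => i _.
  by rewrite Hxi Heta -kinv ksym (ksym q) Hadj.
have -> : \sum_(i < size d) xi d`_i * eta (br z (f d'`_i)) = kk p (fs (br q z)).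
  rewrite (pars_dual kl ksym Hd); apply: eq_bigr => i _.
  by rewrite Hxi Heta -kinv (ksym (br q z)) Hadj ksym.
rewrite -(Hadj p (br q z)) -kinv (ksym _ z) fsE (kkBr kl ksym).
rewrite (brC bl brr balt p z) !(kkNl kl) !kinv.
rewrite /fbracket !(kkDr kl ksym, kkBr kl ksym, kkNr kl ksym).
ring.
Qed.
Lemma transp_eval x (xi eta : dual W) a b :
  (forall w, xi w = kk a w) -> (forall w, eta w = kk b w) ->
  transp_cobracket br kk d d' x xi eta = kk x (br a b).
Proof.
case: Hfac => [[bl brr balt jac] [kl kr ksym knd kinv] _ _].
move=> Hxi Heta.
rewrite [in RHS](rep_dual kl ksym Hd a) [in RHS](rep_dual kl ksym Hd b).
rewrite (br_suml bl) (kk_sumr kl ksym) /transp_cobracket.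
apply: eq_bigr => i _.
rewrite (brZl bl) (kkZr kl ksym) (br_sumr brr) (kk_sumr kl ksym) big_distrr /=.
apply: eq_bigr => j _.
rewrite (brZr brr) !(kkZr kl ksym) Hxi Heta (ksym a) (ksym b).
ring.
Qed.
End Cob.


Section LF.
Variables (K : fieldType) (U W : vectType K) (h : 'Hom(U, W)).
Lemma lfB a b : h (a - b) = h a - h b. Proof. exact: linearB. Qed.
Lemma lfD a b : h (a + b) = h a + h b. Proof. exact: linearD. Qed.
Lemma lfN a : h (- a) = - h a. Proof. exact: linearN. Qed.
Lemma lfZ c a : h (c *: a) = c *: h a. Proof. exact: linearZ. Qed.
Lemma lf0 : h 0 = 0. Proof. exact: linear0. Qed.
Lemma lfP c a b : h (c *: a + b) = c *: h a + h b. Proof. exact: linearP. Qed.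
End LF.

Section Main.
Variables (K : fieldType) (V : vectType K) (br : V -> V -> V) (k : V -> V -> K).
Variables (f : 'End(V)).
Hypothesis Hfac : factorizable br k f.

Local Notation g1 := (f - \1%VF).
Local Notation c1 := (limg (f - \1%VF)).

Let HL : lie_bracket br. Proof. by case: Hfac. Qed.
Let HK : nondeg_inv_sym_form br k. Proof. by case: Hfac. Qed.
Let bl := let: And4 x _ _ _ := HL in x.
Let brr := let: And4 _ x _ _ := HL in x.
Let balt := let: And4 _ _ x _ := HL in x.
Let jac := let: And4 _ _ _ x := HL in x.
Let kl := let: And5 x _ _ _ _ := HK in x.
Let ksym := let: And5 _ _ x _ _ := HK in x.
Let knd := let: And5 _ _ _ x _ := HK in x.
Let kinv := let: And5 _ _ _ _ x := HK in x.
Let Hff : forall x y, br (f x) (f y) = f (br x (f y) + br (f x) y - br x y).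
Proof. by case: Hfac. Qed.

Lemma g1E x : g1 x = f x - x.
Proof. by rewrite add_lfunE opp_lfunE id_lfunE. Qed.

Lemma kfE x y : k (f x) y = k x (y - f y).
Proof.
case: Hfac => _ _ [fs [Hadj Hffs]] _.
have H := congr1 (fun g : 'End(V) => g y) Hffs.
rewrite /= add_lfunE id_lfunE in H.
by rewrite Hadj -{2}H addrAC subrr add0r.
Qed.

Lemma kg1 z y : k (g1 z) y = - k z (f y).
Proof. by rewrite g1E (kkBl kl) kfE (kkBr kl ksym); ring. Qed.

Lemma kg1r z y : k y (g1 z) = - k (f y) z.
Proof. by rewrite ksym kg1 ksym. Qed.

Lemma ortho_ker y : orthogonal_to k c1 y <-> f y = 0.
Proof.
split=> [H | H x /memv_imgP [u _ ->]]; last by rewrite kg1 H (kk0r kl ksym) oppr0.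
apply: knd => z; rewrite ksym.
have := H (g1 z) (memv_img _ (memvf z)); rewrite kg1 => /eqP.
by rewrite oppr_eq0 => /eqP.
Qed.

Lemma c1_g1 z : g1 z \in c1.
Proof. exact: memv_img (memvf z). Qed.

Lemma c1_f x : x \in c1 -> f x \in c1.
Proof.
case/memv_imgP => u _ ->; have -> : f (g1 u) = g1 (f u) by rewrite !g1E lfB.
exact: c1_g1.
Qed.

Lemma br_g1 x y : br (g1 x) (g1 y) = g1 (fbracket br f x y).
Proof.
rewrite !g1E /fbracket -Hff (brBl bl) !(brBr brr).
rewrite !opprB opprD -!addrA; congr (_ + _).
by rewrite addrCA; congr (_ + _); rewrite addrC.
Qed.

Lemma c1_br x y : x \in c1 -> y \in c1 -> br x y \in c1.
Proof. by case/memv_imgP => u _ -> /memv_imgP [v _ ->]; rewrite br_g1 c1_g1. Qed.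


Section Quot.
Variables (Q : vectType K) (pi : 'Hom(V, Q)).
Hypothesis Hsurj : (pi @: c1)%VS = fullv.
Hypothesis Hker : forall x, x \in c1 -> (pi x = 0 <-> orthogonal_to k c1 x).

Definition phi := (pi \o g1)%VF.
Lemma limg_phi : limg phi = fullv.
Proof. by rewrite limg_comp Hsurj. Qed.
Definition s := (g1 \o phi^-1)%VF.
Lemma piS q : pi (s q) = q.
Proof.
by rewrite comp_lfunE -(comp_lfunE pi g1) limg_lfunVK // limg_phi memvf.
Qed.
Lemma sC1 q : s q \in c1.
Proof. by rewrite comp_lfunE c1_g1. Qed.
Lemma kerN n : n \in c1 -> pi n = 0 -> f n = 0.
Proof. by move=> Hn /(Hker Hn) /ortho_ker. Qed.
Lemma kerN2 n : n \in c1 -> f n = 0 -> pi n = 0.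
Proof. by move=> Hn /ortho_ker /(Hker Hn). Qed.
Lemma orthN n c : n \in c1 -> pi n = 0 -> c \in c1 -> k c n = 0.
Proof. by move=> Hn H; apply: (proj1 (Hker Hn) H). Qed.
Lemma nS x : x \in c1 -> s (pi x) - x \in c1 /\ pi (s (pi x) - x) = 0.
Proof. move=> Hx; split; first by apply: memvB => //; exact: sC1.
by rewrite lfB piS subrr. Qed.
Lemma sPi x : s (pi x) = x + (s (pi x) - x).
Proof. by rewrite addrC subrK. Qed.
Lemma brN n c : n \in c1 -> pi n = 0 -> c \in c1 -> pi (br n c) = 0.
Proof.
move=> Hn H Hc; apply/(Hker (c1_br Hn Hc)) => c' Hc'.
by rewrite ksym kinv ksym orthN // c1_br.
Qed.
Lemma piBr x y : x \in c1 -> y \in c1 ->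
  pi (br (s (pi x)) (s (pi y))) = pi (br x y).
Proof.
move=> Hx Hy; have [Hn1 H1] := nS Hx; have [Hn2 H2] := nS Hy.
rewrite [s (pi x)]sPi (brDl bl) lfD (brN Hn1 H1 (sC1 _)) addr0.
rewrite [s (pi y)]sPi (brDr brr) lfD (brC bl brr balt x (s (pi y) - y)) lfN (brN Hn2 H2 Hx).
by rewrite oppr0 addr0.
Qed.
Lemma kS x c : x \in c1 -> c \in c1 -> k (s (pi x)) c = k x c.
Proof.
move=> Hx Hc; have [Hn1 H1] := nS Hx.
by rewrite [s (pi x)]sPi (kkDl kl) (ksym (s (pi x) - x) c) (orthN Hn1 H1 Hc) addr0.
Qed.
Lemma fS x : x \in c1 -> f (s (pi x)) = f x.
Proof.
move=> Hx; have [Hn1 H1] := nS Hx.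
by rewrite [s (pi x)]sPi lfD (kerN Hn1 H1) addr0.
Qed.

Definition brQ p q := pi (br (s p) (s q)).
Definition kQ p q := k (s p) (s q).
Definition ft := (pi \o f \o s)%VF.

Lemma ftE p : ft p = pi (f (s p)).
Proof. by rewrite !comp_lfunE. Qed.
Lemma P1 x y : x \in c1 -> y \in c1 -> pi (br x y) = brQ (pi x) (pi y).
Proof. by move=> Hx Hy; rewrite /brQ piBr. Qed.
Lemma P2 x y : x \in c1 -> y \in c1 -> kQ (pi x) (pi y) = k x y.
Proof. by move=> Hx Hy; rewrite /kQ kS ?sC1 // ksym kS // ksym. Qed.
Lemma P3 x : x \in c1 -> ft (pi x) = pi (f x).
Proof. by move=> Hx; rewrite ftE fS. Qed.
Lemma brQpi p X : X \in c1 -> brQ p (pi X) = pi (br (s p) X).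
Proof. by move=> HX; rewrite P1 ?sC1 // piS. Qed.
Lemma brQpi' p X : X \in c1 -> brQ (pi X) p = pi (br X (s p)).
Proof. by move=> HX; rewrite P1 ?sC1 // piS. Qed.

Lemma FB p q : fbracket brQ ft p q = pi (fbracket br f (s p) (s q)).
Proof.
rewrite /fbracket !ftE brQpi ?c1_f ?sC1 // brQpi' ?c1_f ?sC1 //.
by rewrite /brQ -lfD -lfB.
Qed.

Lemma facQ : factorizable brQ kQ ft.
Proof.
have brQl : forall a x y z, brQ (a *: x + y) z = a *: brQ x z + brQ y z.
  by move=> a x y z; rewrite /brQ lfP bl lfP.
split.
- split=> //.
  + by move=> a x y z; rewrite /brQ lfP brr lfP.
  + by move=> x; rewrite /brQ balt lf0.
  move=> x y z.
  rewrite [brQ y z]/brQ [brQ z x]/brQ [brQ x y]/brQ !brQpi ?c1_br ?sC1 //.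
  by rewrite -!lfD jac lf0.
- split.
  + by move=> a x y z; rewrite /kQ lfP kl.
  + by move=> a x y z; rewrite /kQ lfP (kkDr kl ksym) (kkZr kl ksym).
  + by move=> x y; rewrite /kQ ksym.
  + move=> p H; rewrite -(piS p); apply: kerN2; first exact: sC1.
    apply/ortho_ker => c Hc.
    by rewrite -(kS Hc (sC1 p)) ksym; apply: H.
  + move=> x y z; rewrite /kQ /brQ kS ?c1_br ?sC1 // kinv.
    by rewrite [RHS]ksym kS ?c1_br ?sC1 // ksym.
- exists (\1 - ft)%VF; split; last by rewrite addrC subrK.
  move=> p q; rewrite /kQ ftE kS ?c1_f ?sC1 // kfE.
  rewrite add_lfunE opp_lfunE id_lfunE lfB ftE !(kkBr kl ksym).
  by rewrite [k (s p) (s (pi _))]ksym kS ?c1_f ?sC1 // [k (f _) _]ksym.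
- move=> p q; rewrite -/(fbracket brQ ft p q) FB.
  rewrite P3; last by rewrite /fbracket memvB ?memvD ?c1_br ?c1_f ?sC1.
  by rewrite !ftE -P1 ?c1_f ?sC1 // Hff.
Qed.


Lemma lker_phi : lker phi = (lker f + lker g1)%VS.
Proof.
apply/vspaceP => x; apply/idP/idP.
- rewrite memv_ker comp_lfunE => /eqP H.
  have Hf := kerN (c1_g1 x) H; rewrite g1E lfB in Hf.
  apply/memv_addP; exists (x - f x).
    by rewrite memv_ker lfB -opprB Hf oppr0.
  exists (f x); last by rewrite subrK.
  by rewrite memv_ker g1E Hf.
- case/memv_addP => a Ha [b Hb ->].
  move: Ha Hb; rewrite !memv_ker => Ha Hb; rewrite comp_lfunE lfD (eqP Hb) addr0; apply/eqP.
  apply: kerN2; first exact: c1_g1.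
  by rewrite g1E lfB (eqP Ha) lf0 subr0.
Qed.

Lemma rep_phi (eQ eQ' : seq Q) (xi : dual Q) w :
  dual_bases kQ eQ eQ' ->
  (xi \o phi)%VF w = k (- f (s (\sum_(i < size eQ) xi eQ'`_i *: eQ`_i))) w.
Proof.
move=> HeQ.
have [_ [klQ _ ksymQ _ _] _ _] := facQ.
rewrite comp_lfunE (dual_repr klQ ksymQ HeQ xi) /kQ [phi w]comp_lfunE.
rewrite [k _ (s (pi _))]ksym kS ?c1_g1 ?sC1 // kg1 (kkNl kl) ksym.
by [].
Qed.

End Quot.

Theorem main_gen :
  (forall y, orthogonal_to k (limg (f - \1%VF)) y <-> y \in lker f) /\
  (forall (Q : vectType K) (pi : 'Hom(V, Q)),
    (pi @: limg (f - \1%VF))%VS = fullv ->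
    (forall x, x \in limg (f - \1%VF) ->
       (pi x = 0 <-> orthogonal_to k (limg (f - \1%VF)) x)) ->
    exists (brQ : Q -> Q -> Q) (kQ : Q -> Q -> K) (ft : 'End(Q)),
      [/\ (forall x y, x \in limg (f - \1%VF) -> y \in limg (f - \1%VF) ->
             pi (br x y) = brQ (pi x) (pi y)),
          (forall x y, x \in limg (f - \1%VF) -> y \in limg (f - \1%VF) ->
             kQ (pi x) (pi y) = k x y),
          (forall x, x \in limg (f - \1%VF) -> ft (pi x) = pi (f x)),
          factorizable brQ kQ ft &
          [/\ limg (pi \o (f - \1%VF))%VF = fullv,
              lker (pi \o (f - \1%VF))%VF = (lker f + lker (f - \1%VF))%VS &
              forall (e e' : seq V) (eQ eQ' : seq Q),
                dual_bases k e e' -> dual_bases kQ eQ eQ' ->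
                lie_bialg_hom (fbracket br f)
                  (fun x xi eta => - transp_cobracket br k e e' x xi eta)
                  brQ (fact_cobracket brQ ft eQ eQ')
                  (pi \o (f - \1%VF))%VF]]).
Proof.
split.
  by move=> y; rewrite ortho_ker memv_ker; split => [->|/eqP].
move=> Q pi Hs Hk.
exists (brQ pi), (kQ pi), (ft pi); split.
- by move=> x y Hx Hy; apply: P1.
- by move=> x y Hx Hy; apply: P2.
- by move=> x Hx; apply: P3.
- exact: facQ.
split.
- exact: limg_phi.
- exact: lker_phi.
move=> e e' eQ eQ' He HeQ; split.
  move=> x y; rewrite !comp_lfunE -br_g1 P1 ?c1_g1 //.
move=> x xi eta.
have [_ [klQ _ ksymQ _ _] _ _] := facQ Hs Hk.
rewrite (fact_cob_eval (facQ Hs Hk) HeQ _ (dual_repr klQ ksymQ HeQ xi) (dual_repr klQ ksymQ HeQ eta)).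
rewrite (transp_eval Hfac He _ (fun w => rep_phi Hs Hk xi w HeQ) (fun w => rep_phi Hs Hk eta w HeQ)).
rewrite (FB Hs Hk) comp_lfunE (P2 Hs Hk) ?c1_g1 //; last first.
  by rewrite /fbracket memvB ?memvD ?c1_br ?c1_f ?sC1.
by rewrite kg1 /fbracket -Hff (brNl bl) (brNr brr) opprK.
Qed.
End Main.


Unset Implicit Arguments.
Theorem mainTheorem16 (R : realType) (V : vectType R[i])
    (br : V -> V -> V) (k : V -> V -> R[i]) (f : 'End(V)) :
  factorizable br k f ->
  (* c1^perp = Ker f, where c1 = Im (f - 1) *)
  (forall y, orthogonal_to k (limg (f - \1%VF)) y <-> y \in lker f) /\
  (* for any realization (Q, pi) of the quotient c1 / c1^perp *)
  (forall (Q : vectType R[i]) (pi : 'Hom(V, Q)),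
    (pi @: limg (f - \1%VF))%VS = fullv ->
    (forall x, x \in limg (f - \1%VF) ->
       (pi x = 0 <-> orthogonal_to k (limg (f - \1%VF)) x)) ->
    exists (brQ : Q -> Q -> Q) (kQ : Q -> Q -> R[i]) (ft : 'End(Q)),
      [/\ (forall x y, x \in limg (f - \1%VF) -> y \in limg (f - \1%VF) ->
             pi (br x y) = brQ (pi x) (pi y)),
          (forall x y, x \in limg (f - \1%VF) -> y \in limg (f - \1%VF) ->
             kQ (pi x) (pi y) = k x y),
          (forall x, x \in limg (f - \1%VF) -> ft (pi x) = pi (f x)),
          factorizable brQ kQ ft &
          [/\ limg (pi \o (f - \1%VF))%VF = fullv,
              lker (pi \o (f - \1%VF))%VF = (lker f + lker (f - \1%VF))%VS &
              forall (e e' : seq V) (eQ eQ' : seq Q),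
                dual_bases k e e' -> dual_bases kQ eQ eQ' ->
                lie_bialg_hom (fbracket br f)
                  (fun x xi eta => - transp_cobracket br k e e' x xi eta)
                  brQ (fact_cobracket brQ ft eQ eQ')
                  (pi \o (f - \1%VF))%VF]]).
Proof. move=> Hfac; exact: (main_gen Hfac). Qed.
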